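(* Assume the setting of the context and fix $\Delta=(h,\Delta x)$. Let $(c^{(\iota)}_{i,j})$, $\iota\in\mathbb{N}$, and $\mathbf{V}^{(\iota)}=(\mathbf{V}^{(\iota)}_1,\mathbf{V}^{(\iota)}_2)\in B(\mathcal{A}^{\Delta x})^2$ be a sequence generated by the policy iteration: starting from an initial policy $c^{(0)}_{i,j}\in\mathcal{C}^\Delta_j(x_i)$, for each $\iota\ge0$, (i) (policy evaluation) $\mathbf{V}^{(\iota)}$ solves, for all $i\in\mathbb{N}$, $j=1,2$, $$V^{(\iota)}_{i,j}=hu(c^{(\iota)}_{i,j})+(1-\rho h)\Big[\lambda_jhV^{(\iota)}_{i,\bar\jmath}+(1-\lambda_jh)\sum_k\beta_k\big(x_i+hs_{i,j}(c^{(\iota)}_{i,j})\big)V^{(\iota)}_{k,j}\Big];$$ (ii) (policy update) $c^{(\iota+1)}_{i,j}\in\arg\max_{c\in\mathcal{C}^\Delta_j(x_i)}\Big\{hu(c)+(1-\rho h)(1-\lambda_jh)\sum_k\beta_k(x_i+hs_{i,j}(c))V^{(\iota)}_{k,j}\Big\}$. Then $\mathbf{V}^{(\iota)}\le\mathbf{V}^{(\iota+1)}$ componentwise for all $\iota\in\mathbb{N}$. Moreover $\lim_{\iota\to\infty}\mathbf{V}^{(\iota)}=\mathbf{V}$, where $\mathbf{V}\in B(\mathcal{A}^{\Delta x})^2$ is the unique solution of the scheme, i.e. $\mathcal{F}^\Delta_j(x_i,(V_{i,j},V_{i,\bar\jmath}),V_{\cdot,j})=0$ for all $i\in\mathbb{N}$,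 $j=1,2$.
   Context: Constants: $\rho>0$, $r<\rho$, $0<y_1<y_2$, $\gamma>1$, $\underline{x}\le0$ with $\rho\underline{x}+y_j>0$, $\lambda_1,\lambda_2\ge0$; $\bar\jmath=3-j$; $u(c)=\frac{c^{1-\gamma}}{1-\gamma}$ for $c>0$, $u(0)=-\infty$. Discretization $\Delta=(h,\Delta x)$, $h,\Delta x>0$, $\rho h<1$, $\lambda_jh<1$. Grid $x_i=\underline{x}+i\Delta x$, $i\in\mathbb{N}=\{0,1,\dots\}$, $\mathcal{A}^{\Delta x}=\{x_i\}$; $B(\mathcal{A}^{\Delta x})$ = bounded real sequences indexed by $\mathbb{N}$. $\beta_k(x)=\max\{0,1-|x-x_k|/\Delta x\}$ for $x\ge\underline{x}$. $\mathcal{C}^\Delta_j(x_i)=\{c\ge0:x_i+h(rx_i+y_j-c)\ge\underline{x}\}$, $s_{i,j}(c)=rx_i+y_j-c$. Scheme: $$\mathcal{F}^\Delta_j(x_i,(\mathsf{q}_j,\mathsf{q}_{\bar\jmath}),\mathsf{U})=\rho\mathsf{q}_j-(1-\rho h)\lambda_j(\mathsf{q}_{\bar\jmath}-\mathsf{q}_j)-\sup_{c\in\mathcal{C}^\Delta_j(x_i)}\Big\{u(c)+\frac{(1-\rho h)(1-\lambda_jh)}{h}\Big(\sum_k\beta_k(x_i+hs_{i,j}(c))\mathsf{U}_k-\mathsf{q}_j\Big)\Big\}.$$ *)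

(* Defs.v *)
From HB Require Import structures.
From mathcomp Require Import all_boot all_order all_algebra.
From mathcomp Require Import all_classical all_reals all_analysis.
Set Implicit Arguments. Unset Strict Implicit. Unset Printing Implicit Defensive.
Import Order.TTheory GRing.Theory Num.Theory.
Import numFieldNormedType.Exports.
Local Open Scope ring_scope.

(* Regime index j in {1,2} is encoded by a bool: false = regime 1,
   true = regime 2; the other regime \bar j is ~~ j. *)

Section Defs.
Variable R : realType.

(* CRRA utility, extended-real valued: u(c) = c^(1-gamma)/(1-gamma) for c > 0,
   u(c) = -oo for c <= 0 (only c >= 0 is ever used). *)
Definition util (gamma c : R) : \bar R :=
  if 0 < c then ((c `^ (1 - gamma)) / (1 - gamma))%:E else -oo%E.

Definition grid (xlow dx : R) (i : nat) : R := xlow + i%:R * dx.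

Definition hatb (xlow dx : R) (k : nat) (x : R) : R :=
  Num.max 0 (1 - `|x - grid xlow dx k| / dx).

(* sum_k beta_k(x) U_k  (a series with at most two nonzero terms) *)
Definition interp (xlow dx : R) (U : nat -> R) (x : R) : R :=
  limn (series (fun k => hatb xlow dx k x * U k)).

Definition drift (r xlow dx : R) (y : bool -> R) (i : nat) (j : bool) (c : R) : R :=
  r * grid xlow dx i + y j - c.

Definition adm (r xlow h dx : R) (y : bool -> R) (i : nat) (j : bool) : set R :=
  [set c | 0 <= c /\ xlow <= grid xlow dx i + h * drift r xlow dx y i j c].

Definition bnd (U : nat -> R) : Prop := exists M : R, forall i, `|U i| <= M.

Definition schemeF (rho r gamma xlow h dx : R) (y lam : bool -> R)
  (i : nat) (j : bool) (qj qjb : R) (U : nat -> R) : \bar R :=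
  ((rho * qj - (1 - rho * h) * lam j * (qjb - qj))%:E
   - ereal_sup [set (util gamma c +
        ((1 - rho * h) * (1 - lam j * h) / h *
          (interp xlow dx U (grid xlow dx i + h * drift r xlow dx y i j c) - qj))%:E)%E
       | c in adm r xlow h dx y i j])%E.

Definition polobj (rho r gamma xlow h dx : R) (y lam : bool -> R)
  (i : nat) (j : bool) (U : nat -> R) (c : R) : \bar R :=
  (h%:E * util gamma c +
   ((1 - rho * h) * (1 - lam j * h) *
     interp xlow dx U (grid xlow dx i + h * drift r xlow dx y i j c))%:E)%E.

End Defs.

(* Main.v *)
Require Import Defs.
From HB Require Import structures.
From mathcomp Require Import all_boot all_order all_algebra.
From mathcomp Require Import all_classical all_reals all_analysis.
From mathcomp Require Import ring lra zify.
Import Order.TTheory GRing.Theory Num.Theory.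
Import numFieldNormedType.Exports.
Local Open Scope ring_scope.

Section Interp.
Variable R : realType.
Variables (xlow dx : R).
Hypothesis Hdx : 0 < dx.

Definition zI (x : R) := (x - xlow) / dx.
Definition nI (x : R) : nat := Num.truncn (zI x).
Definition tI (x : R) : R := zI x - (nI x)%:R.
Definition conv (U : nat -> R) (x : R) :=
  (1 - tI x) * U (nI x) + tI x * U (nI x).+1.

Lemma hatbE k x : hatb xlow dx k x = Num.max 0 (1 - `|zI x - k%:R|).
Proof.
rewrite /hatb /grid /zI; congr (Num.max 0 (1 - _)).
have -> : x - (xlow + k%:R * dx) = ((x - xlow) / dx - k%:R) * dx.
  by rewrite mulrBl divfK ?gt_eqF //; ring.
by rewrite normrM (gtr0_norm Hdx) mulfK ?gt_eqF.
Qed.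

Lemma tI_itv x : xlow <= x -> 0 <= tI x < 1.
Proof.
move=> hx; have z0 : 0 <= zI x by rewrite /zI divr_ge0 // ?subr_ge0 // ltW.
have /andP[h1 h2] := truncn_itv z0.
rewrite /tI /nI; apply/andP; split; first by rewrite subr_ge0.
move: h2; rewrite -natr1 /nI; lra.
Qed.

Lemma hatb_far k x : xlow <= x -> k <> nI x -> k <> (nI x).+1 ->
  hatb xlow dx k x = 0.
Proof.
move=> hx hk1 hk2; rewrite hatbE.
have /andP[t0 t1] := tI_itv _ hx.
have ez : zI x = (nI x)%:R + tI x by rewrite /tI; ring.
have : 1 <= `|zI x - k%:R|.
  case: (ltnP k (nI x)) => hk.
  - have : (k.+1 <= nI x)%N by [].
    rewrite -(ler_nat R) => hh.
    rewrite ez (le_trans _ (ler_norm _)) //.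
    move: hh; rewrite -natr1; lra.
  - have : ((nI x).+2 <= k)%N.
      move: hk; rewrite leq_eqVlt => /orP[/eqP ?|]; first by subst.
      rewrite leq_eqVlt => /orP[/eqP ?|//]; by subst.
    rewrite -(ler_nat R) => hh.
    rewrite ez -normrN (le_trans _ (ler_norm _)) //.
    move: hh; rewrite -!natr1; lra.
move=> h1; apply/max_idPl; lra.
Qed.

Lemma hatb_n x : xlow <= x -> hatb xlow dx (nI x) x = 1 - tI x.
Proof.
move=> hx; rewrite hatbE.
have /andP[t0 t1] := tI_itv _ hx.
have -> : zI x - (nI x)%:R = tI x by [].
rewrite ger0_norm //; apply/max_idPr; lra.
Qed.

Lemma hatb_n1 x : xlow <= x -> hatb xlow dx (nI x).+1 x = tI x.
Proof.
move=> hx; rewrite hatbE.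
have /andP[t0 t1] := tI_itv _ hx.
have -> : zI x - (nI x).+1%:R = tI x - 1 by rewrite /tI -natr1; ring.
rewrite ler0_norm; last lra.
have -> : 1 - - (tI x - 1) = tI x by ring.
by apply/max_idPr.
Qed.

Lemma interpE U x : xlow <= x -> interp xlow dx U x = conv U x.
Proof.
move=> hx; rewrite /interp; apply: norm_lim_near_cst.
exists (nI x).+2 => // m /= hm.
elim: m hm => // m IH.
rewrite leq_eqVlt => /orP[/eqP <-|hm].
  rewrite !seriesSr.
  have -> : series (fun k => hatb xlow dx k x * U k) (nI x) = 0.
    rewrite /series /=; apply: big1_seq => k /andP[_].
    rewrite mem_index_iota => /andP[_ hk].
    rewrite hatb_far ?mul0r //.
      by move=> e; rewrite e in hk; lia.
    by move=> e; rewrite e in hk; lia.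
  by rewrite hatb_n // hatb_n1 // add0r.
rewrite seriesSr IH // hatb_far ?mul0r ?addr0 //.
  by move=> e; rewrite e in hm; lia.
by move=> e; rewrite e in hm; lia.
Qed.
End Interp.
Arguments zI {R}. Arguments nI {R}. Arguments tI {R}. Arguments conv {R}.
Arguments tI_itv {R xlow dx}. Arguments interpE {R xlow dx}.

Lemma qpow_small (R : realType) (q E eps : R) : 0 <= q -> q < 1 -> 0 < eps ->
  exists N : nat, q ^+ N * E <= eps.
Proof.
move=> q0 q1 e0.
have hq : `|q| < 1 by rewrite ger0_norm.
have := cvg_expr hq.
move=> /cvgr_dist_lt /(_ (eps / (`|E| + 1))).
have : 0 < eps / (`|E| + 1) by rewrite divr_gt0 // ltr_wpDl.
move=> h /(_ h) [N _ HN].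
exists N; have := HN N (leqnn N) => /=.
rewrite sub0r normrN ger0_norm ?exprn_ge0 // => HqN.
have H1 : q ^+ N * E <= q ^+ N * (`|E| + 1).
  by rewrite ler_wpM2l ?exprn_ge0 // (le_trans (ler_norm E)) // lerDl.
apply: (le_trans H1).
by rewrite -ler_pdivlMr ?ltr_wpDl // ltW.
Qed.

Section Gen.
Variable R : realType.
Variable q : R.
Hypothesis q0 : 0 <= q.
Hypothesis q1 : q < 1.

Lemma iter_bound (D : nat -> bool -> nat -> R) E0 :
  (forall j i, D 0%N j i <= E0) ->
  (forall k E, (forall j i, D k j i <= E) -> forall j i, D k.+1 j i <= q * E) ->
  forall k j i, D k j i <= q ^+ k * E0.
Proof.
move=> H0 HS; elim=> [|k IH] j i; first by rewrite expr0 mul1r.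
by rewrite exprS -mulrA; apply: HS.
Qed.

Lemma le0_of_pow x E0 : (forall k, x <= q ^+ k * E0) -> x <= 0.
Proof.
move=> H; apply/ler_addgt0Pr => e e0.
have [N HN] := @qpow_small R q E0 e q0 q1 e0.
by rewrite add0r (le_trans (H N)).
Qed.

Lemma bnd2 (A : bool -> nat -> R) : (forall j, bnd (A j)) ->
  exists M, 0 <= M /\ forall j i, `|A j i| <= M.
Proof.
move=> H; have [M1 H1] := H false; have [M2 H2] := H true.
exists (Num.max M1 M2); split.
  by rewrite le_max (le_trans _ (H1 0%N)).
case=> i; rewrite le_max; [by rewrite H2 orbT | by rewrite H1].
Qed.
End Gen.
Arguments bnd2 {R}.

Section Main.
Variable R : realType.
Variables (rho r gamma xlow h dx : R) (y lam : bool -> R).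
Hypothesis Hrho : 0 < rho.
Hypothesis Hgamma : 1 < gamma.
Hypothesis Hlam : forall j, 0 <= lam j.
Hypothesis Hh : 0 < h.
Hypothesis Hdx : 0 < dx.
Hypothesis Hrhoh : rho * h < 1.
Hypothesis Hlamh : forall j, lam j * h < 1.

Definition qq := 1 - rho * h.
Definition ur (c : R) := c `^ (1 - gamma) / (1 - gamma).
Definition pt i j c := grid xlow dx i + h * drift r xlow dx y i j c.
Definition Tc (A : bool -> nat -> R) i j c :=
  h * ur c + qq * (lam j * h * A (~~ j) i + (1 - lam j * h) * conv xlow dx (A j) (pt i j c)).

Lemma qq_ge0 : 0 <= qq. Proof. rewrite /qq subr_ge0; exact: ltW. Qed.
Lemma qq_lt1 : qq < 1. Proof. rewrite /qq ltrBlDr ltrDl mulr_gt0 //. Qed.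

Lemma util_pos c : 0 < c -> util gamma c = (ur c)%:E.
Proof. by move=> c0; rewrite /util c0. Qed.

Lemma util_npos c : ~ (0 < c) -> util gamma c = -oo%E.
Proof. by move=> /negP /negbTE c0; rewrite /util c0. Qed.

Lemma ur_le0 c : 0 < c -> ur c <= 0.
Proof.
move=> c0; rewrite /ur pmulr_rle0 ?powR_gt0 // invr_le0 subr_le0 ltW //.
Qed.

Lemma adm_pt i j c : adm r xlow h dx y i j c -> xlow <= pt i j c.
Proof. by case. Qed.

Lemma Tc_diff A B i j c E : adm r xlow h dx y i j c ->
  A (~~ j) i - B (~~ j) i <= E ->
  A j (nI xlow dx (pt i j c)) - B j (nI xlow dx (pt i j c)) <= E ->
  A j (nI xlow dx (pt i j c)).+1 - B j (nI xlow dx (pt i j c)).+1 <= E ->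
  Tc A i j c - Tc B i j c <= qq * E.
Proof.
move=> /adm_pt hx h1 h2 h3.
have /andP[t0 t1] := tI_itv Hdx _ hx.
set t := tI xlow dx (pt i j c) in t0 t1.
have lh0 : 0 <= lam j * h by rewrite mulr_ge0 // ltW.
have lh1 := Hlamh j.
have hc : conv xlow dx (A j) (pt i j c) - conv xlow dx (B j) (pt i j c) <= E.
  rewrite /conv -/t.
  set a1 := A j _ in h2 *; set b1 := B j _ in h2 *.
  set a2 := A j _ in h3 *; set b2 := B j _ in h3 *.
  have e1 : (1 - t) * (a1 - b1) <= (1 - t) * E by rewrite ler_wpM2l // subr_ge0 ltW.
  have e2 : t * (a2 - b2) <= t * E by rewrite ler_wpM2l.
  have -> : (1 - t) * a1 + t * a2 - ((1 - t) * b1 + t * b2) = (1 - t) * (a1 - b1) + t * (a2 - b2) by ring.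
  apply: (le_trans (lerD e1 e2)); rewrite le_eqVlt; apply/orP; left; apply/eqP; ring.
rewrite /Tc.
set C1 := conv _ _ (A j) _ in hc *; set C2 := conv _ _ (B j) _ in hc *.
have -> : h * ur c + qq * (lam j * h * A (~~ j) i + (1 - lam j * h) * C1) -
  (h * ur c + qq * (lam j * h * B (~~ j) i + (1 - lam j * h) * C2)) =
  qq * (lam j * h * (A (~~ j) i - B (~~ j) i) + (1 - lam j * h) * (C1 - C2)) by ring.
apply: ler_wpM2l; first exact: qq_ge0.
have e1 : lam j * h * (A (~~ j) i - B (~~ j) i) <= lam j * h * E by rewrite ler_wpM2l.
have e2 : (1 - lam j * h) * (C1 - C2) <= (1 - lam j * h) * E by rewrite ler_wpM2l // subr_ge0 ltW.
apply: (le_trans (lerD e1 e2)); rewrite le_eqVlt; apply/orP; left; apply/eqP; ring.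
Qed.

Lemma Tc_diff_all A B i j c E : adm r xlow h dx y i j c ->
  (forall j' i', A j' i' - B j' i' <= E) ->
  Tc A i j c - Tc B i j c <= qq * E.
Proof. by move=> ha H; apply: Tc_diff. Qed.

Lemma Tc_mono A B i j c : adm r xlow h dx y i j c ->
  (forall j' i', A j' i' <= B j' i') -> Tc A i j c <= Tc B i j c.
Proof.
move=> ha H; rewrite -subr_le0.
apply: (le_trans (@Tc_diff_all A B i j c 0 ha _)); first by move=> ??; rewrite subr_le0.
by rewrite mulr0.
Qed.

Definition Sub (A : bool -> nat -> R) i j :=
  forall c, adm r xlow h dx y i j c -> 0 < c -> Tc A i j c <= A j i.
Definition Sup (A : bool -> nat -> R) i j :=
  forall e, 0 < e -> exists2 c, adm r xlow h dx y i j c /\ 0 < c & A j i - e <= Tc A i j c.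

Lemma uniq_fix A B : (forall j, bnd (A j)) -> (forall j, bnd (B j)) ->
  (forall i j, Sub A i j /\ Sup A i j) -> (forall i j, Sub B i j /\ Sup B i j) ->
  A = B.
Proof.
move=> bA bB hA hB.
have [MA [MA0 HMA]] := bnd2 _ bA; have [MB [MB0 HMB]] := bnd2 _ bB.
pose D (k : nat) j i := `|A j i - B j i|.
have step : forall (A B : bool -> nat -> R) E,
    (forall i j, Sub A i j /\ Sup A i j) -> (forall i j, Sub B i j /\ Sup B i j) ->
    (forall j i, A j i - B j i <= E) -> forall j i, A j i - B j i <= qq * E.
  move=> A' B' E hA' hB' H j i; apply/ler_addgt0Pr => e e0.
  have [c [ca c0] hc] := (hA' i j).2 e e0.
  have hb := (hB' i j).1 c ca c0.
  have := Tc_diff_all A' B' i j c E ca H.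
  move: hc hb; set a := Tc A' i j c; set b := Tc B' i j c; lra.
have H := @iter_bound R qq D (MA + MB) _ _.
have : forall j i, `|A j i - B j i| <= 0.
  move=> j i; apply: (@le0_of_pow R qq qq_ge0 qq_lt1 _ (MA + MB)) => k.
  apply: H.
  - move=> j' i'; rewrite /D (le_trans (ler_normB _ _)) // lerD //.
  - move=> k' E HE j' i'; rewrite /D ler_norml; apply/andP; split.
      rewrite lerNl opprB; apply: step => // j'' i''.
      by rewrite (le_trans _ (HE j'' i'')) // /D -normrN opprB ler_norm.
    by apply: step => // j'' i''; rewrite (le_trans _ (HE j'' i'')) // /D ler_norm.
move=> H0; apply/funext => j; apply/funext => i.
by apply/eqP; rewrite -subr_eq0 -normr_le0.
Qed.

Definition sS (A : bool -> nat -> R) (i : nat) (j : bool) : set (\bar R) := ([set (util gamma c +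
        ((1 - rho * h) * (1 - lam j * h) / h *
          (interp xlow dx (A j) (grid xlow dx i + h * drift r xlow dx y i j c) - A j i))%:E)%E
       | c in adm r xlow h dx y i j])%classic.
Definition sv (A : bool -> nat -> R) i j := rho * A j i - (1 - rho * h) * lam j * (A (~~ j) i - A j i).

Lemma sF_eq A i j : schemeF rho r gamma xlow h dx y lam i j (A j i) (A (~~ j) i) (A j) =
  ((sv A i j)%:E - ereal_sup (sS A i j))%E.
Proof. by []. Qed.

Lemma elt_pos A i j c : adm r xlow h dx y i j c -> 0 < c ->
  (util gamma c + ((1 - rho * h) * (1 - lam j * h) / h *
          (interp xlow dx (A j) (grid xlow dx i + h * drift r xlow dx y i j c) - A j i))%:E)%E
  = (sv A i j + (Tc A i j c - A j i) / h)%:E.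
Proof.
move=> ca c0; rewrite util_pos // -EFinD; congr (_%:E).
rewrite (interpE Hdx (A j) (pt i j c) (adm_pt _ _ _ ca)) /sv /Tc /qq /pt.
by field; rewrite gt_eqF.
Qed.

Lemma elt_npos A i j c : ~ (0 < c) ->
  (util gamma c + ((1 - rho * h) * (1 - lam j * h) / h *
          (interp xlow dx (A j) (grid xlow dx i + h * drift r xlow dx y i j c) - A j i))%:E)%E
  = (-oo)%E.
Proof. by move=> c0; rewrite util_npos. Qed.

Lemma sF0_of A i j : Sub A i j -> Sup A i j ->
  schemeF rho r gamma xlow h dx y lam i j (A j i) (A (~~ j) i) (A j) = 0%E.
Proof.
move=> hs hp; rewrite sF_eq.
have H1 : (ereal_sup (sS A i j) <= (sv A i j)%:E)%E.
  apply/ereal_supP => _ [c ca <-].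
  have [c0|c0] := pselect (0 < c); last by rewrite elt_npos // leNye.
  rewrite elt_pos // lee_fin gerDl pmulr_lle0 ?invr_gt0 // subr_le0; exact: hs.
have H2 : forall e, 0 < e -> ((sv A i j - e)%:E <= ereal_sup (sS A i j))%E.
  move=> e e0.
  have [c [ca c0] hc] := hp (e * h) (mulr_gt0 e0 Hh).
  apply: le_trans (ereal_sup_ubound _); last by exists c.
  rewrite elt_pos // lee_fin lerD2l.
  rewrite ler_pdivlMr // mulNr; move: hc; set T := Tc A i j c; lra.
move: H1 H2; case: (ereal_sup (sS A i j)) => [s'| |] H1 H2.
- have -> : s' = sv A i j.
    apply/eqP; rewrite eq_le -lee_fin H1 /=.
    apply/ler_addgt0Pr => e e0; rewrite -lerBlDr -lee_fin; exact: H2.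
  by rewrite subee.
- by [].
- by have := H2 1 ltr01.
Qed.

Lemma of_sF0 A i j :
  schemeF rho r gamma xlow h dx y lam i j (A j i) (A (~~ j) i) (A j) = 0%E ->
  Sub A i j /\ Sup A i j.
Proof.
rewrite sF_eq => H.
have Hs : ereal_sup (sS A i j) = (sv A i j)%:E.
  move: H; case: (ereal_sup (sS A i j)) => [s'| |] //=.
  by move=> /eqP; rewrite -EFinB eqe subr_eq0 => /eqP ->.
split.
  move=> c ca c0.
  have := ereal_sup_ubound (S := sS A i j) (ex_intro2 _ _ c ca erefl).
  rewrite Hs elt_pos // lee_fin gerDl pmulr_lle0 ?invr_gt0 // subr_le0 //.
move=> e e0.
have := @ub_ereal_sup_adherent R (sS A i j) (e / h) (divr_gt0 e0 Hh).
rewrite Hs => /(_ erefl) [_ [c ca <-]].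
have [c0|c0] := pselect (0 < c); last by rewrite elt_npos.
rewrite elt_pos // -EFinB lte_fin ltrD2l => hc.
exists c => //.
have : - e < Tc A i j c - A j i.
  by move: hc; rewrite ltr_pdivlMr // mulNr divfK ?gt_eqF.
set T := Tc A i j c; lra.
Qed.

Section PI.
Variables (c : nat -> nat -> bool -> R) (V : nat -> bool -> nat -> R).
Hypothesis Hcpos : forall k i j, 0 < c k i j.
Hypothesis Hcadm : forall k i j, adm r xlow h dx y i j (c k i j).
Hypothesis HTV : forall k i j, V k j i = Tc (V k) i j (c k i j).
Hypothesis Hmax : forall k i j c', adm r xlow h dx y i j c' -> 0 < c' ->
  Tc (V k) i j c' <= Tc (V k) i j (c k.+1 i j).
Hypothesis HVb : forall k j, bnd (V k j).

Lemma V_mono k j i : V k j i <= V k.+1 j i.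
Proof.
have [M1 [_ H1]] := bnd2 _ (HVb k); have [M2 [_ H2]] := bnd2 _ (HVb k.+1).
pose D (n : nat) j i := V k j i - V k.+1 j i.
have HD := @iter_bound R qq D (M1 + M2) _ _.
rewrite -subr_le0; apply: (@le0_of_pow R qq qq_ge0 qq_lt1 _ (M1 + M2)) => n.
apply: HD.
- move=> j' i'; rewrite /D (le_trans (ler_norm _)) // (le_trans (ler_normB _ _)) // lerD //.
- move=> n' E HE j' i'; rewrite /D.
  have h1 := Hmax k i' j' _ (Hcadm k i' j') (Hcpos k i' j').
  have h2 := Tc_diff_all (V k) (V k.+1) i' j' (c k.+1 i' j') E (Hcadm _ _ _) HE.
  move: h1 h2; rewrite -HTV -HTV; lra.
Qed.

Lemma V_le0 k j i : V k j i <= 0.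
Proof.
have [M1 [_ H1]] := bnd2 _ (HVb k).
pose D (n : nat) j i := V k j i.
have HD := @iter_bound R qq D M1 _ _.
apply: (@le0_of_pow R qq qq_ge0 qq_lt1 _ M1) => n.
apply: HD.
- by move=> j' i'; rewrite /D (le_trans (ler_norm _)).
- move=> n' E HE j' i'; rewrite /D.
  have h2 := Tc_diff_all (V k) (fun _ _ => 0) i' j' (c k i' j') E (Hcadm _ _ _).
  have h3 : Tc (fun _ _ => 0) i' j' (c k i' j') <= 0.
    rewrite /Tc /conv !(mulr0, addr0).
    by rewrite pmulr_rle0 // ur_le0.
  have h2' : Tc (V k) i' j' (c k i' j') - Tc (fun _ _ => 0) i' j' (c k i' j') <= qq * E.
    by apply: h2 => j'' i''; rewrite subr0; exact: HE.
  rewrite HTV; lra.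
Qed.

Lemma V_mono_le k k' j i : (k <= k')%N -> V k j i <= V k' j i.
Proof.
move=> hk; rewrite -(subnK hk); elim: (k' - k)%N => [|n IH]; first by rewrite add0n.
by rewrite addSn; apply: le_trans IH (V_mono _ _ _).
Qed.

Definition W j i := sup (range (fun k => V k j i)).

Lemma W_hs j i : has_sup (range (fun k => V k j i)).
Proof.
split; first by exists (V 0%N j i); exists 0%N.
by exists 0 => _ [k _ <-]; exact: V_le0.
Qed.

Lemma V_le_W k j i : V k j i <= W j i.
Proof. by apply: sup_upper_bound (W_hs j i) _ _; exists k. Qed.

Lemma W_le0 j i : W j i <= 0.
Proof.
apply: ge_sup; first by exists (V 0%N j i); exists 0%N.
by move=> _ [k _ <-]; exact: V_le0.
Qed.

Lemma W_adh j i e : 0 < e -> exists k, forall k', (k <= k')%N -> W j i - e < V k' j i.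
Proof.
move=> e0; have [_ [k _ <-] hk] := sup_adherent e0 (W_hs j i).
by exists k => k' hk'; rewrite /W; apply: (lt_le_trans hk); exact: V_mono_le.
Qed.

Lemma V_step k i j c' : adm r xlow h dx y i j c' -> 0 < c' ->
  Tc (V k) i j c' <= V k.+1 j i.
Proof.
move=> ca c0; apply: le_trans (Hmax k _ _ _ ca c0) _.
rewrite HTV; apply: Tc_mono => // ??; exact: V_mono.
Qed.

Lemma W_sub i j : Sub W i j.
Proof.
move=> c' ca c0; apply/ler_addgt0Pr => e e0.
set n := nI xlow dx (pt i j c').
have [k1 H1] := W_adh (~~ j) i _ e0.
have [k2 H2] := W_adh j n _ e0.
have [k3 H3] := W_adh j n.+1 _ e0.
pose K := maxn k1 (maxn k2 k3).
have h1 := H1 K ltac:(rewrite /K; lia).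
have h2 := H2 K ltac:(rewrite /K; lia).
have h3 := H3 K ltac:(rewrite /K; lia).
have := Tc_diff W (V K) i j c' e ca.
move=> /(_ ltac:(lra) ltac:(rewrite -/n; lra) ltac:(rewrite -/n; lra)) hd.
have hq : qq * e <= e by rewrite ler_piMl ?ltW // qq_lt1.
have := V_step K _ _ _ ca c0; have := V_le_W K.+1 j i.
move: hd hq; set T1 := Tc W i j c'; set T2 := Tc _ _ _ _; lra.
Qed.

Lemma W_sup i j : Sup W i j.
Proof.
move=> e e0; have [k Hk] := W_adh j i _ e0.
exists (c k.+1 i j); first by split.
have := Hk k.+1 (leqnSn _); rewrite HTV.
have := @Tc_mono (V k.+1) W i j (c k.+1 i j) (Hcadm _ _ _) (fun _ _ => V_le_W _ _ _).
set T1 := Tc _ _ _ _; set T2 := Tc _ _ _ _; lra.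
Qed.

Lemma W_bnd j : bnd (W j).
Proof.
have [M0 [_ H0]] := bnd2 _ (HVb 0%N).
exists M0 => i; rewrite ler_norml; have := H0 j i; rewrite ler_norml => /andP[a b].
have := V_le_W 0%N j i; have := W_le0 j i; lra.
Qed.

Lemma V_conv eps : 0 < eps -> exists N : nat, forall k, (N <= k)%N ->
  forall j i, `|V k j i - W j i| <= eps.
Proof.
move=> e0.
have [M0 [M00 H0]] := bnd2 _ (HVb 0%N).
pose D k j i := W j i - V k j i.
have HD : forall k j i, D k j i <= qq ^+ k * M0.
  apply: iter_bound.
  - move=> j' i'; rewrite /D; have := H0 j' i'; rewrite ler_norml => /andP[a b].
    have := W_le0 j' i'; lra.
  - move=> k' E HE j' i'; rewrite /D; apply/ler_addgt0Pr => e e1.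
    have [c' [ca c0] hc] := W_sup i' j' e e1.
    have := V_step k' _ _ _ ca c0; have := Tc_diff_all W (V k') i' j' c' E ca HE.
    move: hc; lra.
have [N HN] := @qpow_small R qq M0 eps qq_ge0 qq_lt1 e0.
exists N => k hk j i.
rewrite distrC ger0_norm ?subr_ge0 ?V_le_W //.
apply: le_trans (HN).
apply: le_trans (HD k j i) _.
by rewrite ler_wpM2r // ler_wiXn2l // ?qq_ge0 // ltW // qq_lt1.
Qed.

Lemma PI_main :
  (forall k j i, V k j i <= V k.+1 j i) /\
  exists W : bool -> nat -> R,
    [/\ forall j, bnd (W j),
        forall i j, schemeF rho r gamma xlow h dx y lam i j (W j i) (W (~~ j) i) (W j) = 0%E,
        forall W' : bool -> nat -> R, (forall j, bnd (W' j)) ->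
          (forall i j, schemeF rho r gamma xlow h dx y lam i j (W' j i) (W' (~~ j) i) (W' j) = 0%E) ->
          W' = W
      & forall eps : R, 0 < eps -> exists N : nat, forall k, (N <= k)%N ->
          forall j i, `|V k j i - W j i| <= eps].
Proof.
split; first exact: V_mono.
exists W; split.
- exact: W_bnd.
- by move=> i j; apply: sF0_of; [exact: W_sub | exact: W_sup].
- move=> W' bW' hW'; apply: uniq_fix => //; first exact: W_bnd.
    by move=> i j; apply: of_sF0.
  by move=> i j; split; [exact: W_sub | exact: W_sup].
- exact: V_conv.
Qed.
End PI.

End Main.
Theorem mainTheorem13 (R : realType) (rho r gamma xlow h dx : R) (y lam : bool -> R)
  (Hrho : 0 < rho) (Hr : r < rho)
  (Hy1 : 0 < y false) (Hy12 : y false < y true)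
  (Hgamma : 1 < gamma) (Hxlow : xlow <= 0)
  (Hxy : forall j, 0 < rho * xlow + y j)
  (Hlam : forall j, 0 <= lam j)
  (Hh : 0 < h) (Hdx : 0 < dx) (Hrhoh : rho * h < 1)
  (Hlamh : forall j, lam j * h < 1)
  (c : nat -> nat -> bool -> R) (V : nat -> bool -> nat -> R)
  (Hc0 : forall i j, adm r xlow h dx y i j (c 0%N i j))
  (HVb : forall k j, bnd (V k j))
  (Heval : forall k i j,
     ((V k j i)%:E =
      h%:E * util gamma (c k i j) +
      ((1 - rho * h) *
        (lam j * h * V k (~~ j) i +
         (1 - lam j * h) *
           interp xlow dx (V k j)
             (grid xlow dx i + h * drift r xlow dx y i j (c k i j))))%:E)%E)
  (Hupd_adm : forall k i j, adm r xlow h dx y i j (c k.+1 i j))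
  (Hupd_max : forall k i j c', adm r xlow h dx y i j c' ->
     (polobj rho r gamma xlow h dx y lam i j (V k j) c'
      <= polobj rho r gamma xlow h dx y lam i j (V k j) (c k.+1 i j))%E) :
  (forall k j i, V k j i <= V k.+1 j i) /\
  exists W : bool -> nat -> R,
    [/\ forall j, bnd (W j),
        forall i j, schemeF rho r gamma xlow h dx y lam i j (W j i) (W (~~ j) i) (W j) = 0%E,
        forall W' : bool -> nat -> R, (forall j, bnd (W' j)) ->
          (forall i j, schemeF rho r gamma xlow h dx y lam i j (W' j i) (W' (~~ j) i) (W' j) = 0%E) ->
          W' = W
      & forall eps : R, 0 < eps -> exists N : nat, forall k, (N <= k)%N ->
          forall j i, `|V k j i - W j i| <= eps].
Proof.
have Hcadm : forall k i j, adm r xlow h dx y i j (c k i j).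
  by case=> [|k] i j; [exact: Hc0 | exact: Hupd_adm].
have hmul : forall x : R, (h%:E * (-oo) + x%:E = -oo)%E.
  by move=> x; rewrite mulrNy gtr0_sg // mul1e.
have Hcpos : forall k i j, 0 < c k i j.
  move=> k i j; have := Heval k i j.
  have [//|hn] := pselect (0 < c k i j).
  have -> : (util gamma (c k i j) = -oo)%E.
    by rewrite /util; have -> : (0 < c k i j) = false by apply/negP.
  by rewrite hmul.
have utE : forall c', 0 < c' -> util gamma c' = (ur R gamma c')%:E.
  by move=> c' c0; rewrite /util c0.
have HTV : forall k i j, V k j i = Tc R rho r gamma xlow h dx y lam (V k) i j (c k i j).
  move=> k i j; have := Heval k i j; rewrite utE // -EFinM -EFinD => -[->].
  rewrite (interpE Hdx (V k j) (pt R r xlow h dx y i j (c k i j)) (@adm_pt R _ _ _ _ _ _ _ _ (Hcadm k i j))).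
  by rewrite /Tc /qq.
have Hmax : forall k i j c', adm r xlow h dx y i j c' -> 0 < c' ->
    Tc R rho r gamma xlow h dx y lam (V k) i j c' <=
    Tc R rho r gamma xlow h dx y lam (V k) i j (c k.+1 i j).
  move=> k i j c' ca c0; have := Hupd_max k i j c' ca.
  rewrite /polobj !utE // -!EFinM -!EFinD lee_fin.
  rewrite (interpE Hdx (V k j) (pt R r xlow h dx y i j c') (@adm_pt R _ _ _ _ _ _ _ _ ca)).
  rewrite (interpE Hdx (V k j) (pt R r xlow h dx y i j (c k.+1 i j)) (@adm_pt R _ _ _ _ _ _ _ _ (Hcadm k.+1 i j))).
  rewrite /Tc /qq /pt.
  set C1 := conv _ _ _ _; set C2 := conv _ _ _ _; move=> H.
  lra.
have HH := (@PI_main R rho r gamma xlow h dx y lam Hrho Hgamma Hlam Hh Hdx Hrhoh Hlamh c V Hcpos Hcadm HTV Hmax HVb).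
exact: HH.
Qed.
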